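(* Let $q\ge 2$, $r\ge 2$ and $t,s\ge 0$ be integers. Then $$\max_{\substack{\mathbf{x}_1,\mathbf{x}_2\in J_r^*\\ \mathbf{x}_1\neq \mathbf{x}_2}} \bigl|\mathcal{B}_{t,s}(\mathbf{x}_1)\cap \mathcal{B}_{t,s}(\mathbf{x}_2)\bigr| \;+\;1 \;=\; M,\qquad\text{where}\quad M=\sum_{i=1}^{t} A_{t-i,s}(r-1)+\sum_{i=1}^{s} A_{t,s-i}(r-1)+1 .$$ Equivalently, $M$ is the minimum number $N$ such that any $N$ distinct sequences lying in $\mathcal{B}_{t,s}(\mathbf{x})$ for some $\mathbf{x}\in J_r^*$ determine $\mathbf{x}$ uniquely, i.e. $M$ is the minimum number of distinct outputs of the $(t,s)$-sticky-insdel channel required to uniquely reconstruct the transmitted sequence.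
   Context: Let $\Sigma_q=\{0,1,\dots,q-1\}$ and $\Sigma_q^*$ the set of finite strings over $\Sigma_q$. Every $\mathbf{x}\in\Sigma_q^*$ can be written uniquely as $\mathbf{x}=c_1^{u_1}c_2^{u_2}\cdots c_r^{u_r}$ with $c_i\neq c_{i+1}$ and $u_i\ge 1$ (runs); $r$ is the number of runs and $J_r^*$ is the set of strings with exactly $r$ runs. Write $\Psi(\mathbf{x})=(\mathbf{c},\mathbf{u})$ with $\mathbf{c}=c_1\cdots c_r$, $\mathbf{u}=(u_1,\dots,u_r)\in\mathbb{Z}_+^r$; $\Psi$ is a bijection from $J_r^*$ onto pairs of such $\mathbf{c}$ and $\mathbf{u}\in\mathbb{Z}_+^r$. A sticky insertion duplicates a symbol within its run (increases one run length by one); a sticky deletion deletes a symbol from a run of length at least 2. The sticky-insdel ball $\mathcal{B}_{t,s}(\mathbf{x})$ is the set of sequences obtainable from $\mathbf{x}$ by at most $t$ sticky insertions and at most $s$ sticky deletions; equivalently, if $\Psi(\mathbf{x})=(\mathbf{c},\mathbf{u})$, then $\mathbf{y}\in\mathcal{B}_{t,s}(\mathbf{x})$ iff $\Psi(\mathbf{y})=(\mathbf{c},\mathbf{v})$ with $\mathbf{v}\in\mathbb{Z}_+^r$, $\sum_{i=1}^r\max\{0,u_i-v_i\}\le s$ and $\sum_{i=1}^r\max\{0,v_i-u_i\}\le t$. The numbers $A_{t,s}(r)$ (for integers $t,s$ and $r\ge1$) are defined by: $A_{t,s}(r)=0$ if $t<0$ or $s<0$; $A_{t,s}(1)=t+s+1$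 for $t,s\ge0$; and for $r\ge 2$, $t,s\ge 0$: $A_{t,s}(r)=\sum_{i=1}^{t}A_{t-i,s}(r-1)+\sum_{i=1}^{s}A_{t,s-i}(r-1)+A_{t,s}(r-1)$. *)

(* Defs.v *)
From mathcomp Require Import all_boot.
Set Implicit Arguments. Unset Strict Implicit. Unset Printing Implicit Defensive.

Fixpoint runs_aux {T : eqType} (c : T) (n : nat) (s : seq T) : seq (T * nat) :=
  match s with
  | [::] => [:: (c, n)]
  | a :: s' => if a == c then runs_aux c n.+1 s' else (c, n) :: runs_aux a 1 s'
  end.

Definition runs {T : eqType} (x : seq T) : seq (T * nat) :=
  if x is a :: x' then runs_aux a 1 x' else [::].

Definition in_J {T : eqType} (r : nat) (x : seq T) : bool := size (runs x) == r.

(* Sticky-insdel ball B_{t,s}(x), via the run-length characterization: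
   y in B_{t,s}(x) iff Psi(y) = (c, v) where Psi(x) = (c, u) and
   sum max(0,u_i-v_i) <= s, sum max(0,v_i-u_i) <= t.
   (nat subtraction is truncated, so u - v = max(0, u - v).) *)
Definition in_ball {T : eqType} (t s : nat) (x y : seq T) : bool :=
  let u := unzip2 (runs x) in
  let v := unzip2 (runs y) in
  [&& unzip1 (runs y) == unzip1 (runs x),
      sumn [seq p.1 - p.2 | p <- zip u v] <= s &
      sumn [seq p.2 - p.1 | p <- zip u v] <= t].

(* A0 r' t s = A_{t,s}(r'+1) for t, s >= 0 *)
Fixpoint A0 (r' : nat) (t s : nat) : nat :=
  match r' with
  | 0 => t + s + 1
  | r''.+1 => \sum_(1 <= i < t.+1) A0 r'' (t - i) s
              + \sum_(1 <= i < s.+1) A0 r'' t (s - i) + A0 r'' t s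
  end.

(* A_{t,s}(r) for r >= 1 (value at r = 0 is irrelevant) *)
Definition A (t s r : nat) : nat := if r is r'.+1 then A0 r' t s else 0.

(* |{y | P y}| <= n  (for an arbitrary, a priori possibly infinite, predicate) *)
Definition card_le {T : eqType} (P : pred T) (n : nat) : Prop :=
  forall l : seq T, uniq l -> all P l -> size l <= n.

Definition card_eq {T : eqType} (P : pred T) (n : nat) : Prop :=
  exists l : seq T, [/\ uniq l, size l = n & forall y, P y <-> y \in l].

Definition Mval (t s r : nat) : nat :=
  \sum_(1 <= i < t.+1) A (t - i) s r.-1 + \sum_(1 <= i < s.+1) A t (s - i) r.-1 + 1.

(* Main.v *)
Require Import Defs.
From mathcomp Require Import all_boot all_algebra zify.
Set Implicit Arguments. Unset Strict Implicit. Unset Printing Implicit Defensive.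
Import GRing.Theory Num.Theory.

Section Runs.
Variable T : eqType.

Definition enc (c : seq T) (v : seq nat) : seq T :=
  flatten [seq nseq p.2 p.1 | p <- zip c v].

Lemma nseqS_cat (n : nat) (a : T) (s : seq T) : nseq n.+1 a ++ s = nseq n a ++ a :: s.
Proof. by elim: n => //= n ->. Qed.

Lemma runs_aux_dec (c : T) n s :
  flatten [seq nseq p.2 p.1 | p <- runs_aux c n s] = nseq n c ++ s.
Proof.
elim: s c n => [|a s IH] c n /=; first by rewrite cats0.
case: eqP => [->|_]; first by rewrite IH nseqS_cat.
by rewrite /= IH.
Qed.

Lemma runs_dec (y : seq T) : enc (unzip1 (runs y)) (unzip2 (runs y)) = y.
Proof.
rewrite /enc zip_unzip; case: y => [|a y] //=.
by rewrite runs_aux_dec.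
Qed.

Lemma runs_inj (y1 y2 : seq T) : runs y1 = runs y2 -> y1 = y2.
Proof. by move=> h; rewrite -(runs_dec y1) -(runs_dec y2) h. Qed.

Lemma runs_aux_nseq (a : T) n k Y : runs_aux a n (nseq k a ++ Y) = runs_aux a (n + k) Y.
Proof.
elim: k n => [|k IH] n /=; first by rewrite addn0.
by rewrite eqxx IH addSnnS.
Qed.

Lemma runs_enc (c : seq T) (v : seq nat) :
  sorted (fun a b => a != b) c -> size v = size c -> all (fun n => 0 < n) v ->
  runs (enc c v) = zip c v.
Proof.
elim: c v => [|a c IH] [|m v] //= hs [hsz] /andP[hm hv].
have hs' : sorted (fun a b => a != b) c by apply: (path_sorted hs).
have IH' := IH v hs' hsz hv; clear IH hs'.
rewrite /enc /= -/(enc c v).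
case: m hm => // m _.
rewrite /runs /= runs_aux_nseq add1n.
move: hs IH' hsz hv; case: c => [|b c] ; case: v => [|m2 v] //= .
move=> /andP[hab _] IH' _ /andP[hm2 _].
move: IH'; rewrite /enc /=.
case: m2 hm2 => // m2 _ /= .
by rewrite eq_sym (negbTE hab) => <-.
Qed.

End Runs.


Definition pos (z : int) : nat := if z is Posz n then n else 0.
Definition neg (z : int) : nat := if z is Negz n then n.+1 else 0.

Lemma posneg (z : int) : z = (Posz (pos z) - Posz (neg z))%R /\ (pos z = 0 \/ neg z = 0).
Proof. case: z => n /=; last by rewrite NegzE; split; [rewrite sub0r|left].
by rewrite subr0; split; [|right]. Qed.

Definition Dmem (t s : nat) (w : seq int) : bool :=
  (sumn (map pos w) <= t) && (sumn (map neg w) <= s).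

Fixpoint enumD (r t s : nat) : seq (seq int) :=
  match r with
  | 0 => [:: [::]]
  | r'.+1 =>
    [seq Posz i :: w | i <- iota 1 t, w <- enumD r' (t - i) s]
    ++ [seq Negz i.-1 :: w | i <- iota 1 s, w <- enumD r' t (s - i)]
    ++ [seq 0%R :: w | w <- enumD r' t s]
  end.

Lemma Dmem_cons t s z w : Dmem t s (z :: w) =
  [&& pos z <= t, neg z <= s & Dmem (t - pos z) (s - neg z) w].
Proof.
rewrite /Dmem /=.
apply/idP/idP.
  move=> /andP[h1 h2]; apply/and3P; split; lia.
move=> /and3P[h1 h2 /andP[h3 h4]]; apply/andP; split; lia.
Qed.

Lemma mem_enumD r t s w : (w \in enumD r t s) = (size w == r) && Dmem t s w.
Proof.
elim: r t s w => [|r IH] t s w /=.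
  rewrite inE; case: w => [|z w] //=.
rewrite !mem_cat.
apply/idP/idP.
  case/or3P.
  - case/allpairsPdep => i [w' [hi hw' ->]].
    move: hi; rewrite mem_iota => hi.
    rewrite IH in hw'; case/andP: hw' => /eqP hs hD.
    rewrite /= hs eqxx /= Dmem_cons /= subn0 hD andbT; lia.
  - case/allpairsPdep => i [w' [hi hw' ->]].
    move: hi; rewrite mem_iota => hi.
    rewrite IH in hw'; case/andP: hw' => /eqP hs hD.
    rewrite /= hs eqxx /= Dmem_cons /= subn0.
    have -> : i.-1.+1 = i by lia.
    rewrite hD andbT; lia.
  - case/mapP => w' hw' ->.
    rewrite IH in hw'; case/andP: hw' => /eqP hs hD.
    by rewrite /= hs eqxx /= Dmem_cons /= !subn0 hD.
case: w => [|z w] //= /andP[hs]; rewrite eqSS in hs.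
rewrite Dmem_cons => /and3P[h1 h2 h3].
case: z h1 h2 h3 => [n|n] /= h1 h2 h3.
  case: n h1 h3 => [|n] h1 h3.
    apply/orP; right; apply/orP; right; apply/mapP; exists w => //.
    by rewrite IH hs; rewrite !subn0 in h3.
  apply/orP; left; apply/allpairsPdep; exists n.+1, w; split => //.
    rewrite mem_iota; lia.
  by rewrite IH hs; rewrite subn0 in h3.
apply/orP; right; apply/orP; left; apply/allpairsPdep; exists n.+1, w; split => //.
  rewrite mem_iota; lia.
by rewrite IH hs; rewrite subn0 in h3.
Qed.

Lemma uniq_ap (F : nat -> int) (s : seq nat) (t : nat -> seq (seq int)) :
  {in s &, injective F} -> uniq s -> (forall i, uniq (t i)) ->
  uniq [seq F i :: w | i <- s, w <- t i].
Proof.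
elim: s => [|x s IH] //= hF /andP[hx hs] ht.
rewrite cat_uniq IH // ?andbT ?map_inj_uniq ?ht //; last 2 first.
- by move=> a b []. 
- by move=> a b ha hb; apply: hF; rewrite inE ?ha ?hb orbT.
apply/hasPn => y /allpairsPdep [i [w [hi _ ->]]].
apply/mapP => -[w' _ [] /hF hix _].
by move: hx; rewrite -hix ?inE ?hi ?eqxx ?orbT.
Qed.

Lemma uniq_enumD r t s : uniq (enumD r t s).
Proof.
elim: r t s => [|r IH] t s //=.
rewrite !cat_uniq; apply/and3P; split; [| |apply/and3P; split].
- apply: (uniq_ap (F := Posz)) => //; last exact: iota_uniq.
  by move=> a b _ _ [].
- apply/hasPn => x; rewrite mem_cat => /orP[] hx; apply/negP => /allpairsPdep [i [w [hi _ hxe]]]; subst x.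
    by case/allpairsPdep: hx => [? [? [_ _ []]]].
  by case/mapP: hx => [? _ []]; move: hi; rewrite mem_iota; case: i.
- apply: (uniq_ap (F := fun i => Negz i.-1)) => //; last exact: iota_uniq.
  move=> a b; rewrite !mem_iota => ha hb [] h; lia.
- apply/hasPn => x /mapP [w _ ->].
  by apply/negP => /allpairsPdep [? [? [_ _ []]]].
- by rewrite map_inj_uniq // => a b [].
Qed.

Lemma map_cst (A B : Type) (c : B) (l : seq A) : [seq c | _ <- l] = nseq (size l) c.
Proof. by elim: l => //= ? ? ->. Qed.

Lemma enumD_S r t s : enumD r.+1 t s =
    [seq Posz i :: w | i <- iota 1 t, w <- enumD r (t - i) s]
    ++ [seq Negz i.-1 :: w | i <- iota 1 s, w <- enumD r t (s - i)]
    ++ [seq 0%R :: w | w <- enumD r t s].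
Proof. by []. Qed.

Lemma size_enumD r t s : size (enumD r.+1 t s) = A0 r t s.
Proof.
elim: r t s => [|r IH] t s.
  rewrite enumD_S !size_cat !size_allpairs_dep size_map.
  rewrite (_ : [seq size (enumD 0 (t - x) s) | x <- iota 1 t] = nseq t 1); last by rewrite map_cst size_iota.
  rewrite (_ : [seq size (enumD 0 t (s - x)) | x <- iota 1 s] = nseq s 1); last by rewrite map_cst size_iota.
  rewrite !sumn_nseq /=; lia.
rewrite enumD_S !size_cat !size_allpairs_dep size_map IH !sumnE !big_map.
rewrite -/(index_iota 1 t.+1) -/(index_iota 1 s.+1) addnA /=.
congr (_ + _ + _); rewrite /index_iota subSS subn0; apply: eq_bigr => i _; exact: IH.
Qed.


Definition lp (d : seq int) (k : nat) (w : seq int) : seq int :=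
  [seq (p.1 - p.2 *+ k)%R | p <- zip w d].

Lemma lp_cons e d k z w : lp (e :: d) k (z :: w) = (z - e *+ k)%R :: lp d k w.
Proof. by []. Qed.

Lemma size_lp d k w : size w = size d -> size (lp d k w) = size w.
Proof. by move=> h; rewrite size_map size_zip h minnn. Qed.

Lemma lp0 d w : size w = size d -> lp d 0 w = w.
Proof.
elim: w d => [|z w IH] [|e d] //= [h].
by rewrite lp_cons IH // mulr0n subr0.
Qed.

Lemma lpS d k w : size w = size d -> lp d 1 (lp d k w) = lp d k.+1 w.
Proof.
elim: w d => [|z w IH] [|e d] //= [h].
by rewrite !lp_cons IH // mulr1n mulrSr opprD addrA.
Qed.

Lemma lp_inj d k a b : size a = size d -> size b = size d -> lp d k a = lp d k b -> a = b.
Proof.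
elim: a b d => [|x a IH] [|y b] [|e d] //= [ha] [hb]; rewrite !lp_cons => -[hxy h].
by rewrite (IH b d) //; move/addIr: hxy => ->.
Qed.

Lemma nth_lp d k w i : size w = size d -> i < size w ->
  nth 0%R (lp d k w) i = (nth 0%R w i - nth 0%R d i *+ k)%R.
Proof.
move=> h hi; rewrite (nth_map (0%R, 0%R)) ?size_zip ?h ?minnn -?h //.
by rewrite nth_zip.
Qed.

Lemma sumn_nth (l : seq nat) i : nth 0 l i <= sumn l.
Proof. elim: l i => [|x l IH] [|i] //=; [lia| have := IH i; lia]. Qed.

Lemma Dmem_nth t s w i : Dmem t s w -> pos (nth 0%R w i) <= t /\ neg (nth 0%R w i) <= s.
Proof.
case/andP => h1 h2; case: (ltnP i (size w)) => hi; last by rewrite nth_default.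
split.
  by apply: leq_trans h1; rewrite -(nth_map 0%R 0) //; apply: sumn_nth.
by apply: leq_trans h2; rewrite -(nth_map 0%R 0) //; apply: sumn_nth.
Qed.

Lemma ivt (P : pred nat) n : P 0 -> ~~ P n -> exists k, (k < n) && P k && ~~ P k.+1.
Proof.
elim: n => [|n IH] h0 hn; first by rewrite h0 in hn.
case hP: (P n).
  by exists n; rewrite ltnSn hP hn.
have [k /andP[/andP[hk1 hk2] hk3]] := IH h0 (negbT hP).
by exists k; rewrite hk2 hk3 (ltn_trans hk1) ?ltnSn.
Qed.

Definition ins (j : nat) (w : seq int) : seq int := take j w ++ 0%R :: drop j w.

Lemma size_ins j w : j <= size w -> size (ins j w) = (size w).+1.
Proof. by move=> h; rewrite /ins size_cat /= size_take size_drop; case: ltnP => h'; lia. Qed.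

Lemma nth_ins j w : j <= size w -> nth 0%R (ins j w) j = 0%R.
Proof. by move=> h; rewrite /ins nth_cat size_takel // ltnn subnn. Qed.

Lemma Dmem_ins t s j w : Dmem t s (ins j w) = Dmem t s w.
Proof.
by rewrite /Dmem /ins !map_cat !sumn_cat /= !add0n -!sumn_cat -!map_cat !cat_take_drop.
Qed.

Lemma ins_inj j a b : j <= size a -> j <= size b -> ins j a = ins j b -> a = b.
Proof.
move=> ha hb /eqP; rewrite /ins eqseq_cat ?size_takel // => /andP[/eqP h1 /eqP [h2]].
by rewrite -(cat_take_drop j a) -(cat_take_drop j b) h1 h2.
Qed.

Lemma aux (x : int) (k P N t s : nat) : x != 0%R -> (-(x * k%:Z))%R = (P%:Z - N%:Z)%R -> P <= t -> N <= s -> k <= t + s.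
Proof. move=> /eqP h1 h2 h3 h4. have [hp|hn] : (0 < x \/ x < 0)%R by lia. nia. nia. Qed.

Section Key.
Variables (r t s : nat) (d : seq int).
Hypothesis hd : size d = r.+2.
Hypothesis hnz : has (fun z => z != 0%R) d.

Let j := find (fun z => z != 0%R) d.
Let dj := nth 0%R d j.
Lemma hj : j < r.+2. Proof. by rewrite -hd -has_find. Qed.
Lemma hdj : dj != 0%R. Proof. exact: (nth_find 0%R hnz). Qed.

Let K := (t + s).+1.
Definition Q (w : seq int) (k : nat) := Dmem t s (lp d k w) && ~~ Dmem t s (lp d k.+1 w).
Definition kk (w : seq int) := find (Q w) (iota 0 K).
Definition g (w' : seq int) := lp d (kk (ins j w')) (ins j w').

Lemma bound w k : size w = r.+2 -> nth 0%R w j = 0%R -> Dmem t s (lp d k w) -> k <= t + s.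
Proof.
move=> hw hj0 hD; have := Dmem_nth j hD.
rewrite nth_lp ?hw ?hd ?hj // hj0 sub0r.
rewrite -mulr_natr.
have [e1 e2] := posneg (- (dj * k%:R))%R.
move=> [h1 h2].
apply: (aux hdj _ h1 h2); by rewrite -natz.
Qed.

Lemma Qk w : size w = r.+2 -> nth 0%R w j = 0%R -> Dmem t s w -> Q w (kk w).
Proof.
move=> hw hj0 hD.
have : exists k, (k < K) && Dmem t s (lp d k w) && ~~ Dmem t s (lp d k.+1 w).
  apply: (@ivt (fun k => Dmem t s (lp d k w)) K).
  - by rewrite /= lp0 // hw hd.
  - apply/negP => /(bound hw hj0); rewrite /K; lia.
move=> [k /andP[/andP[hk1 hk2] hk3]].
have hh : has (Q w) (iota 0 K).
  by apply/hasP; exists k; [rewrite mem_iota | rewrite /Q hk2 hk3].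
have := nth_find 0 hh; rewrite has_find size_iota in hh.
by rewrite nth_iota.
Qed.

Lemma g_mem w' : w' \in enumD r.+1 t s ->
  (g w' \in enumD r.+2 t s) && ~~ Dmem t s (lp d 1 (g w')).
Proof.
rewrite mem_enumD => /andP[/eqP hs hD].
have hjs : j <= size w' by rewrite hs -ltnS hj.
have hw : size (ins j w') = r.+2 by rewrite size_ins // hs.
have := Qk hw (nth_ins hjs); rewrite Dmem_ins => /(_ hD) /andP[h1 h2].
by rewrite mem_enumD /g size_lp ?hw ?hd // eqxx h1 lpS // hw hd.
Qed.

Lemma g_inj : {in enumD r.+1 t s &, injective g}.
Proof.
move=> a b; rewrite !mem_enumD => /andP[/eqP ha _] /andP[/eqP hb _].
have hja : j <= size a by rewrite ha -ltnS hj.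
have hjb : j <= size b by rewrite hb -ltnS hj.
have hwa : size (ins j a) = size d by rewrite size_ins // ha hd.
have hwb : size (ins j b) = size d by rewrite size_ins // hb hd.
rewrite /g => h.
have := congr1 (fun x => nth 0%R x j) h.
rewrite /= !nth_lp ?hwa ?hwb ?hd ?hj // !nth_ins // !sub0r => /oppr_inj.
move/(mulrIn hdj) => hk.
rewrite hk in h.
by apply: (ins_inj hja hjb); apply: (lp_inj hwa hwb h).
Qed.

Lemma key (L : seq (seq int)) : uniq L ->
  all (fun w => (size w == r.+2) && Dmem t s w && Dmem t s (lp d 1 w)) L ->
  size L + A0 r t s <= A0 r.+1 t s.
Proof.
move=> hu ha.
rewrite -!size_enumD -(size_map g (enumD r.+1 t s)) -size_cat.
apply: uniq_leq_size.
  rewrite cat_uniq hu map_inj_in_uniq ?uniq_enumD ?andbT; last exact: g_inj.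
  apply/hasPn => x /mapP [w' hw' ->].
  apply/negP => hin; move: (allP ha _ hin) => /andP[_ h3].
  by case/andP: (g_mem hw') => _; rewrite h3.
move=> x; rewrite mem_cat => /orP[hx|/mapP [w' hw' ->]].
  by move: (allP ha _ hx); rewrite mem_enumD => /andP[/andP[-> ->] _].
by case/andP: (g_mem hw').
Qed.

End Key.


Definition dfv (v u : seq nat) : seq int := [seq (Posz p.1 - Posz p.2)%R | p <- zip v u].
Definition advv (u : seq nat) (w : seq int) : seq nat := [seq absz (Posz p.1 + p.2)%R | p <- zip u w].

Lemma dfv_cons a v b u : dfv (a :: v) (b :: u) = (Posz a - Posz b)%R :: dfv v u.
Proof. by []. Qed.
Lemma advv_cons a u z w : advv (a :: u) (z :: w) = absz (Posz a + z)%R :: advv u w.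
Proof. by []. Qed.

Lemma pos_diff a b : pos (Posz a - Posz b)%R = a - b.
Proof. have [e1 e2] := posneg (Posz a - Posz b)%R; lia. Qed.
Lemma neg_diff a b : neg (Posz a - Posz b)%R = b - a.
Proof. have [e1 e2] := posneg (Posz a - Posz b)%R; lia. Qed.

Lemma map_pos_dfv v u : size v = size u ->
  map pos (dfv v u) = [seq p.2 - p.1 | p <- zip u v].
Proof.
elim: v u => [|a v IH] [|b u] //= [h].
by rewrite pos_diff -IH.
Qed.
Lemma map_neg_dfv v u : size v = size u ->
  map neg (dfv v u) = [seq p.1 - p.2 | p <- zip u v].
Proof.
elim: v u => [|a v IH] [|b u] //= [h].
by rewrite neg_diff -IH.
Qed.

Lemma in_ballE (T : eqType) t s (x y : seq T) :
  in_ball t s x y = (unzip1 (runs y) == unzip1 (runs x)) &&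
                    Dmem t s (dfv (unzip2 (runs y)) (unzip2 (runs x))).
Proof.
rewrite /in_ball; case: eqP => //= h.
have hs : size (unzip2 (runs y)) = size (unzip2 (runs x)).
  by have := congr1 size h; rewrite !size_map.
by rewrite /Dmem map_pos_dfv // map_neg_dfv // andbC.
Qed.

Lemma size_dfv v u : size v = size u -> size (dfv v u) = size u.
Proof. by move=> h; rewrite size_map size_zip h minnn. Qed.

Lemma lp_dfv v u1 u2 : size v = size u1 -> size u2 = size u1 ->
  lp (dfv u2 u1) 1 (dfv v u1) = dfv v u2.
Proof.
elim: v u1 u2 => [|a v IH] [|b u1] [|c u2] //= [h1] [h2].
rewrite !dfv_cons lp_cons IH //; congr (_ :: _); rewrite mulr1n; lia.
Qed.

Lemma dfv_inj a b u : size a = size u -> size b = size u -> dfv a u = dfv b u -> a = b.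
Proof.
elim: a b u => [|x a IH] [|y b] [|z u] // [ha] [hb]; rewrite !dfv_cons => -[h1 h2].
by rewrite (IH b u) //; congr (_ :: _); lia.
Qed.

Lemma has_dfv u2 u1 : size u2 = size u1 -> u2 != u1 -> has (fun z => z != 0%R) (dfv u2 u1).
Proof.
elim: u2 u1 => [|a u2 IH] [|b u1] // [h]; rewrite dfv_cons /=.
case: (eqVneq a b) => [->|hab] hne.
  by rewrite IH ?orbT //; apply: contra hne => /eqP ->.
by apply/orP; left; apply/eqP => e; move/eqP: hab; lia.
Qed.

Lemma advv_dfv v u : size v = size u -> advv u (dfv v u) = v.
Proof.
elim: v u => [|a v IH] [|b u] // [h].
rewrite dfv_cons advv_cons IH //; congr (_ :: _); lia.
Qed.

Lemma Dmem_tail t s z w : Dmem t s (z :: w) -> neg z <= s /\ Dmem t s w.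
Proof. rewrite /Dmem /= => /andP[h1 h2]; split; [lia | apply/andP; split; lia]. Qed.

Lemma advv_nseq t s n w : size w = n -> Dmem t s w ->
  [/\ dfv (advv (nseq n s.+1) w) (nseq n s.+1) = w,
      all (fun m => 0 < m) (advv (nseq n s.+1) w) &
      size (advv (nseq n s.+1) w) = n].
Proof.
elim: w n => [|z w IH] [|n] // [h] /Dmem_tail [hz hD].
have [e1 e2 e3] := IH n h hD.
have [p1 p2] := posneg z.
rewrite advv_cons dfv_cons e1 /= e2 e3; split => //.
  congr (_ :: _); lia.
rewrite andbT; lia.
Qed.

Lemma lp_zero n k w : size w = n -> lp (nseq n 0%R) k w = w.
Proof. elim: w n => [|z w IH] [|n] // [h]; by rewrite lp_cons IH // mul0rn subr0. Qed.

Lemma pos_pred (z : int) : pos (z - 1)%R = (pos z).-1.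
Proof. have [p1 p2] := posneg z; have [q1 q2] := posneg (z - 1)%R; lia. Qed.
Lemma neg_pred (z : int) : neg (z - 1)%R = (if pos z == 0 then (neg z).+1 else 0).
Proof. have [p1 p2] := posneg z; have [q1 q2] := posneg (z - 1)%R; case: eqP => h; lia. Qed.

Lemma count_lb t s n :
  count (fun w => Dmem t s (lp (1%R :: nseq n 0%R) 1 w)) (enumD n.+1 t s)
  + size (enumD n t s) = size (enumD n.+1 t s).
Proof.
rewrite -(count_predC (fun w => Dmem t s (lp (1%R :: nseq n 0%R) 1 w)) (enumD n.+1 t s)).
congr (_ + _).
pose h := fun w' : seq int => (- Posz (s - sumn (map neg w')))%R :: w'.
rewrite -size_filter -(size_map h (enumD n t s)).
apply: perm_size; rewrite perm_sym; apply: uniq_perm.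
- by rewrite filter_uniq // uniq_enumD.
- by rewrite map_inj_uniq ?uniq_enumD // => a b [].
move=> w; rewrite mem_filter mem_enumD /=.
apply/idP/idP.
  case/andP => hn; case: w hn => [|z w] //= hn /andP[hs hD].
  rewrite eqSS in hs; move: hn; rewrite lp_cons lp_zero ?(eqP hs) // ?mulr1n.
  move: hD; rewrite /Dmem /= => /andP[h1 h2] h3.
  have [p1 p2] := posneg z; rewrite pos_pred neg_pred in h3.
  apply/mapP; exists w.
    rewrite mem_enumD hs /Dmem; apply/andP; split; lia.
  rewrite /h; congr (_ :: _).
  move: h3; case: eqP => hz; rewrite negb_and -!ltnNge => /orP[] h3; lia.
case/mapP => w' hw' ->; move: hw'; rewrite mem_enumD => /andP[/eqP hs hD].
rewrite /h /= hs eqxx /= lp_cons lp_zero // ?mulr1n.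
move: hD; rewrite /Dmem /= => /andP[h1 h2].
set z := (- Posz _)%R.
have [p1 p2] := posneg z.
rewrite /z in p1 p2 *.
apply/andP; split.
  rewrite pos_pred neg_pred; case: eqP => hz; rewrite negb_and -!ltnNge; apply/orP; right; lia.
apply/andP; split; lia.
Qed.


Lemma Mval_eq t s r : (Mval t s r.+2).-1 + A0 r t s = A0 r.+1 t s.
Proof. by rewrite /Mval addn1. Qed.

Lemma alt_sorted (T : eqType) (a b : T) : a != b -> forall n m,
  path (fun x y => x != y) (if odd m then b else a)
    [seq (if odd i then b else a) | i <- iota m.+1 n].
Proof.
move=> hab; elim=> [|n IH] m //.
move: (IH m.+1); rewrite /= => ->; rewrite andbT; case: (odd m) => //=; by rewrite eq_sym.
Qed.

Lemma upper (q r t s : nat) (x1 x2 : seq 'I_q) :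
  in_J r.+2 x1 -> in_J r.+2 x2 -> x1 <> x2 ->
  card_le [pred y | in_ball t s x1 y && in_ball t s x2 y] (A0 r.+1 t s - A0 r t s).
Proof.
move=> /eqP hJ1 /eqP hJ2 hne l hu ha.
case: l hu ha => [|y0 l0] hu ha; first by [].
suff: size (y0 :: l0) + A0 r t s <= A0 r.+1 t s by lia.
set c1 := unzip1 (runs x1); set c2 := unzip1 (runs x2).
set u1 := unzip2 (runs x1); set u2 := unzip2 (runs x2).
have hy0 := allP ha y0 (mem_head _ _).
rewrite /= !in_ballE in hy0; case/andP: hy0 => /andP[/eqP e1 _] /andP[/eqP e2 _].
have hc : c1 = c2 by rewrite /c1 /c2 -e1 -e2.
have hu1 : size u1 = r.+2 by rewrite size_map.
have hu2 : size u2 = r.+2 by rewrite size_map.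
have hc1 : size c1 = r.+2 by rewrite size_map.
have hneq : u2 != u1.
  apply/eqP => e; apply: hne; apply: runs_inj.
  by rewrite -(zip_unzip (runs x1)) -(zip_unzip (runs x2)) -/c1 -/c2 -/u1 -/u2 hc e.
set L := y0 :: l0 in hu ha *.
have hsz : forall y, y \in L -> unzip1 (runs y) = c1 /\ size (unzip2 (runs y)) = r.+2.
  move=> y hy; move: (allP ha y hy); rewrite /= !in_ballE => /andP[/andP[/eqP e _] _].
  split; first by rewrite e.
  by rewrite size_map -hc1 /c1 -e size_map.
pose f (y : seq (ordinal q)) := dfv (unzip2 (runs y)) u1.
rewrite -(size_map f).
apply: (@key r t s (dfv u2 u1)).
- by rewrite size_dfv // hu2 hu1.
- by apply: has_dfv; rewrite ?hu1 ?hu2.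
- rewrite map_inj_in_uniq // => a b ha' hb' hab.
  have [ea sa] := hsz a ha'; have [eb sb] := hsz b hb'.
  apply: runs_inj; rewrite -(zip_unzip (runs a)) -(zip_unzip (runs b)) ea eb.
  congr zip; apply: (dfv_inj (u := u1)); rewrite ?sa ?sb ?hu1 //.
- apply/allP => w /mapP [y hy ->].
  have [ey sy] := hsz y hy.
  move: (allP ha y hy); rewrite /= !in_ballE => /andP[/andP[_ d1] /andP[_ d2]].
  rewrite size_dfv ?sy ?hu1 // eqxx d1 /= lp_dfv ?sy ?hu1 ?hu2 //.
Qed.

Lemma dfv_nseq n a : dfv (nseq n a) (nseq n a) = nseq n 0%R.
Proof. by elim: n => // n IH; rewrite [nseq _ _]/= dfv_cons IH subrr. Qed.

Lemma lower (q r t s : nat) (hq : 1 < q) :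
  exists x1 x2 : seq 'I_q, [/\ in_J r.+2 x1, in_J r.+2 x2, x1 <> x2 &
      card_eq [pred y | in_ball t s x1 y && in_ball t s x2 y] (A0 r.+1 t s - A0 r t s)].
Proof.
pose o0 : 'I_q := Ordinal (ltnW hq).
pose o1 : 'I_q := Ordinal hq.
have ho : o0 != o1 by [].
pose c := [seq (if odd i then o1 else o0) | i <- iota 0 r.+2].
have hcs : sorted (fun a b => a != b) c by exact: (alt_sorted ho r.+1 0).
have hc : size c = r.+2 by rewrite size_map size_iota.
pose u1 := nseq r.+2 s.+1.
pose u2 := s.+2 :: nseq r.+1 s.+1.
have hu1 : size u1 = r.+2 by rewrite size_nseq.
have hu2 : size u2 = r.+2 by rewrite /= size_nseq.
have hr1 : runs (enc c u1) = zip c u1.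
  by apply: runs_enc => //; rewrite ?hu1 ?hc // all_nseq.
have hr2 : runs (enc c u2) = zip c u2.
  by apply: runs_enc => //; rewrite ?hu2 ?hc // /u2 /= all_nseq orbT.
have hd : dfv u2 u1 = 1%R :: nseq r.+1 0%R.
  rewrite /u1 /u2 /= dfv_cons; congr (_ :: _); first by lia.
  by rewrite -[s.+1 :: _]/(nseq r.+1 s.+1) -[0%R :: _]/(nseq r.+1 0%R) dfv_nseq.
have e1 : unzip1 (runs (enc c u1)) = c by rewrite hr1 unzip1_zip // hc hu1.
have e2 : unzip1 (runs (enc c u2)) = c by rewrite hr2 unzip1_zip // hc hu2.
have f1 : unzip2 (runs (enc c u1)) = u1 by rewrite hr1 unzip2_zip // hc hu1.
have f2 : unzip2 (runs (enc c u2)) = u2 by rewrite hr2 unzip2_zip // hc hu2.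
exists (enc c u1), (enc c u2); split.
- by rewrite /in_J hr1 size_zip hc hu1 minnn.
- by rewrite /in_J hr2 size_zip hc hu2 minnn.
- move=> e; have := congr1 runs e; rewrite hr1 hr2 /= => -[]; lia.
pose P := fun w => Dmem t s (lp (dfv u2 u1) 1 w).
set E := enumD r.+2 t s.
exists [seq enc c (advv u1 w) | w <- E & P w]; split.
- rewrite map_inj_in_uniq ?filter_uniq ?uniq_enumD // => a b.
  rewrite !mem_filter /E !mem_enumD => /andP[_ /andP[/eqP ha Da]] /andP[_ /andP[/eqP hb Db]] h.
  have [a1 a2 a3] := advv_nseq ha Da.
  have [b1 b2 b3] := advv_nseq hb Db.
  have := congr1 runs h; rewrite !runs_enc ?a3 ?b3 ?hc // => /(congr1 unzip2).
  rewrite !unzip2_zip ?a3 ?b3 ?hc // => hab.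
  by rewrite -a1 -b1 hab.
- rewrite size_map size_filter.
  have := count_lb t s r.+1; rewrite /E !size_enumD /P hd; lia.
move=> y; rewrite /= !in_ballE e1 e2 f1 f2; split.
  case/andP => /andP[/eqP ey D1] /andP[_ D2].
  have hv : size (unzip2 (runs y)) = r.+2.
    by rewrite size_map -hc -ey size_map.
  apply/mapP; exists (dfv (unzip2 (runs y)) u1).
    rewrite mem_filter /E mem_enumD size_dfv ?hv ?hu1 // eqxx D1 andbT /P.
    by rewrite lp_dfv ?hv ?hu1 ?hu2 // D2.
  by rewrite advv_dfv ?hv ?hu1 // -{1}(runs_dec y) ey.
case/mapP => w; rewrite mem_filter /E mem_enumD => /andP[Pw /andP[/eqP hw Dw]] ->.
have [a1 a2 a3] := advv_nseq hw Dw.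
rewrite runs_enc ?a3 ?hc // unzip1_zip ?a3 ?hc // unzip2_zip ?a3 ?hc // eqxx /=.
rewrite a1 Dw /=.
by rewrite -(lp_dfv (v := advv u1 w) (u1 := u1)) ?a3 ?hu1 ?hu2 // a1.
Qed.

Theorem theorem1 (q r t s : nat) (hq : 2 <= q) (hr : 2 <= r) :
  let M := Mval t s r in
  (exists x1 x2 : seq 'I_q, [/\ in_J r x1, in_J r x2, x1 <> x2 &
      card_eq [pred y | in_ball t s x1 y && in_ball t s x2 y] M.-1]) /\
  (forall x1 x2 : seq 'I_q, in_J r x1 -> in_J r x2 -> x1 <> x2 ->
      card_le [pred y | in_ball t s x1 y && in_ball t s x2 y] M.-1).
Proof.
case: r hr => [|[|r]] // _ M.
have hM : M.-1 = A0 r.+1 t s - A0 r t s by rewrite -(Mval_eq t s r) addnK.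
rewrite hM; split; last exact: upper.
exact: lower.
Qed.
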